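(* For every matrix $A=[a_{ij}]_{i,j=1}^2\in\mathbb{C}^{2\times 2}$, writing $s=\operatorname{tr}A$ and $p=\det A$: (i) $\mu_E(A)<1$ if and only if $(s,p)\in\mathbb{G}$ and $\displaystyle |a_{21}|\sup_{z\in\mathbb{D}}\frac{1-|z|^2}{|1-sz+pz^2|}<1$; (ii) $\mu_E(A)\le 1$ if and only if $(s,p)\in\Gamma$ and $\displaystyle \frac{|a_{21}|(1-|z|^2)}{|1-sz+pz^2|}\le 1$ for all $z\in\mathbb{D}$.
   Context: $\mathbb{D}$ is the open unit disc in $\mathbb{C}$. The symmetrised bidisc is $\mathbb{G}=\{(z+w,zw): |z|<1,|w|<1\}\subset\mathbb{C}^2$ and $\Gamma=\{(z+w,zw):|z|\le1,|w|\le1\}$ is its closure. Let $E=\operatorname{span}\{I, \begin{pmatrix}0&1\\0&0\end{pmatrix}\}\subset\mathbb{C}^{2\times2}$, i.e. $E$ consists of the matrices $\begin{pmatrix}z&w\\0&z\end{pmatrix}$, $z,w\in\mathbb{C}$. For $A\in\mathbb{C}^{2\times2}$ the structured singular value $\mu_E(A)$ is defined by $1/\mu_E(A)=\inf\{\|X\|: X\in E,\ \det(I-AX)=0\}$ (operator norm; with $\mu_E(A)=0$ if no such $X$ exists). *)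

(* Defs.v *)
From Stdlib Require Import Reals Lra ClassicalEpsilon.
Open Scope R_scope.

Record Cplx := mkC { re : R; im : R }.
Definition C0 : Cplx := mkC 0 0.
Definition C1 : Cplx := mkC 1 0.
Definition Cadd (a b : Cplx) : Cplx := mkC (re a + re b) (im a + im b).
Definition Copp (a : Cplx) : Cplx := mkC (- re a) (- im a).
Definition Csub (a b : Cplx) : Cplx := Cadd a (Copp b).
Definition Cmul (a b : Cplx) : Cplx :=
  mkC (re a * re b - im a * im b) (re a * im b + im a * re b).
Definition Cmod (a : Cplx) : R := sqrt (re a ^ 2 + im a ^ 2).

Definition Rsup (E : R -> Prop) : R :=
  epsilon (inhabits 0) (fun m => is_lub E m).
Definition Rinf (E : R -> Prop) : R := - Rsup (fun t => E (- t)).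

Record M2 := mkM2 { a11 : Cplx; a12 : Cplx; a21 : Cplx; a22 : Cplx }.
Definition V2 : Type := (Cplx * Cplx)%type.

Definition M2apply (X : M2) (v : V2) : V2 :=
  (Cadd (Cmul (a11 X) (fst v)) (Cmul (a12 X) (snd v)),
   Cadd (Cmul (a21 X) (fst v)) (Cmul (a22 X) (snd v))).
Definition M2mul (X Y : M2) : M2 :=
  mkM2 (Cadd (Cmul (a11 X) (a11 Y)) (Cmul (a12 X) (a21 Y)))
       (Cadd (Cmul (a11 X) (a12 Y)) (Cmul (a12 X) (a22 Y)))
       (Cadd (Cmul (a21 X) (a11 Y)) (Cmul (a22 X) (a21 Y)))
       (Cadd (Cmul (a21 X) (a12 Y)) (Cmul (a22 X) (a22 Y))).
Definition M2sub (X Y : M2) : M2 :=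
  mkM2 (Csub (a11 X) (a11 Y)) (Csub (a12 X) (a12 Y))
       (Csub (a21 X) (a21 Y)) (Csub (a22 X) (a22 Y)).
Definition M2id : M2 := mkM2 C1 C0 C0 C1.
Definition M2tr (X : M2) : Cplx := Cadd (a11 X) (a22 X).
Definition M2det (X : M2) : Cplx :=
  Csub (Cmul (a11 X) (a22 X)) (Cmul (a12 X) (a21 X)).

Definition V2norm (v : V2) : R :=
  sqrt (Cmod (fst v) ^ 2 + Cmod (snd v) ^ 2).
Definition opnorm (X : M2) : R :=
  Rsup (fun t => exists v : V2, V2norm v <= 1 /\ t = V2norm (M2apply X v)).

Definition inE (X : M2) : Prop :=
  exists z w : Cplx, X = mkM2 z w C0 z.

Definition muE_set (A : M2) (r : R) : Prop :=
  exists X : M2, inE X /\ M2det (M2sub M2id (M2mul A X)) = C0 /\ r = opnorm X.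

Definition muE (A : M2) : R :=
  if excluded_middle_informative (exists r, muE_set A r)
  then / Rinf (muE_set A) else 0.

Definition inG (s p : Cplx) : Prop :=
  exists z w : Cplx, Cmod z < 1 /\ Cmod w < 1 /\ s = Cadd z w /\ p = Cmul z w.
Definition inGamma (s p : Cplx) : Prop :=
  exists z w : Cplx, Cmod z <= 1 /\ Cmod w <= 1 /\ s = Cadd z w /\ p = Cmul z w.

Definition ratio (s p z : Cplx) : R :=
  (1 - Cmod z ^ 2) / Cmod (Cadd (Csub C1 (Cmul s z)) (Cmul p (Cmul z z))).

(* Main.v *)
Require Import Defs.
From Stdlib Require Import Reals Lra Psatz ClassicalEpsilon.
From Coquelicot Require Coquelicot.
Open Scope R_scope.
Module Aux.
Import Coquelicot.Coquelicot.

Definition toC (a : Cplx) : C := (re a, im a).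
Definition ofC (c : C) : Cplx := mkC (fst c) (snd c).
Lemma toC_ofC c : toC (ofC c) = c. Proof. destruct c; reflexivity. Qed.
Lemma ofC_toC a : ofC (toC a) = a. Proof. destruct a; reflexivity. Qed.
Lemma toC_inj a b : toC a = toC b -> a = b.
Proof. intros H. rewrite <- (ofC_toC a), <- (ofC_toC b), H. reflexivity. Qed.
Lemma toC_add a b : toC (Cadd a b) = (toC a + toC b)%C. Proof. reflexivity. Qed.
Lemma toC_mul a b : toC (Cmul a b) = (toC a * toC b)%C. Proof. reflexivity. Qed.
Lemma toC_opp a : toC (Defs.Copp a) = (- toC a)%C. Proof. reflexivity. Qed.
Lemma toC_sub a b : toC (Csub a b) = (toC a - toC b)%C. Proof. reflexivity. Qed.
Lemma toC_0 : toC Defs.C0 = RtoC 0. Proof. reflexivity. Qed.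
Lemma toC_1 : toC Defs.C1 = RtoC 1. Proof. reflexivity. Qed.
Lemma mod_toC a : Defs.Cmod a = Cmod (toC a). Proof. reflexivity. Qed.

Lemma Rsup_lub (E : R -> Prop) :
  (exists x, E x) -> (exists b, forall x, E x -> x <= b) -> is_lub E (Rsup E).
Proof.
  intros [x Hx] [b Hb]. unfold Rsup. apply epsilon_spec.
  destruct (completeness E) as [m Hm].
  - exists b; intros y Hy; apply Hb; auto.
  - exists x; auto.
  - exists m; exact Hm.
Qed.

Lemma sqrt_le_mul u v k : 0 <= u -> 0 <= v -> 0 <= k -> u <= k^2 * v -> sqrt u <= k * sqrt v.
Proof.
  intros Hu Hv Hk H. rewrite <- (sqrt_pow2 k Hk) at 1.
  rewrite <- sqrt_mult by nra. apply sqrt_le_1_alt. exact H.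
Qed.

Definition nrm (r m : R) := (m + sqrt (m^2 + 4*r^2))/2.

Lemma nrm_facts r m : 0 <= r -> 0 <= m ->
  nrm r m ^2 = m * nrm r m + r^2 /\ m <= nrm r m /\ r <= nrm r m /\ 0 <= nrm r m.
Proof.
  intros Hr Hm. unfold nrm.
  assert (HS := sqrt_pos (m^2 + 4*r^2)).
  assert (HS2 : sqrt (m^2 + 4*r^2) ^2 = m^2 + 4*r^2) by (apply pow2_sqrt; nra).
  set (S := sqrt (m^2 + 4*r^2)) in *.
  assert (m <= S) by nra. assert (2*r <= S) by nra.
  repeat split; nra.
Qed.

Lemma nrm_ge c r m : 0 <= r -> 0 <= m -> 0 < c -> c <= nrm r m -> c^2 - r^2 <= m*c.
Proof.
  intros Hr Hm Hc H. destruct (nrm_facts r m Hr Hm) as (E & _ & _ & _).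
  set (n := nrm r m) in *.
  assert (Hid : n*(c^2 - m*c - r^2) = (c-n)*(n*c + r^2)).
  { replace ((c-n)*(n*c+r^2)) with (n*(c^2-m*c-r^2) - c*(n^2 - m*n - r^2)) by ring.
    rewrite E; ring. }
  assert (Hp : (c-n)*(n*c + r^2) <= 0).
  { apply Rmult_le_0_r; nra. }
  nra.
Qed.

Lemma nrm_r0 r : 0 <= r -> nrm r 0 = r.
Proof.
  intros Hr. unfold nrm. replace (0^2 + 4*r^2) with ((2*r)^2) by ring.
  rewrite sqrt_pow2 by lra. field.
Qed.


Definition Xm (z w : Cplx) : M2 := mkM2 z w Defs.C0 z.

Lemma V2norm_nonneg v : 0 <= V2norm v.
Proof. apply sqrt_pos. Qed.

Lemma apply_bound z w v :
  V2norm (M2apply (Xm z w) v) <= nrm (Defs.Cmod z) (Defs.Cmod w) * V2norm v.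
Proof.
  destruct v as [a b]. unfold V2norm, M2apply, Xm; cbn [fst snd a11 a12 a21 a22].
  rewrite !mod_toC, !toC_add, !toC_mul, toC_0.
  set (Z := toC z); set (W := toC w); set (A := toC a); set (B := toC b).
  replace (RtoC 0 * A + Z * B)%C with (Z * B)%C by ring.
  rewrite Cmod_mult.
  assert (Ht : Cmod (Z*A + W*B) <= Cmod Z * Cmod A + Cmod W * Cmod B).
  { eapply Rle_trans. apply Cmod_triangle. rewrite !Cmod_mult. lra. }
  assert (H0 := Cmod_ge_0 (Z*A+W*B)).
  pose proof (Cmod_ge_0 Z); pose proof (Cmod_ge_0 W); pose proof (Cmod_ge_0 A); pose proof (Cmod_ge_0 B).
  destruct (nrm_facts (Cmod Z) (Cmod W)) as (E & Hn1 & Hn2 & Hn3); auto.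
  set (n := nrm _ _) in *. set (r := Cmod Z) in *. set (m := Cmod W) in *.
  set (al := Cmod A) in *. set (be := Cmod B) in *. set (x := Cmod (Z*A+W*B)) in *.
  clearbody n r m al be x.
  apply sqrt_le_mul; try nra.
  assert (HD : n * (n^2*(al^2+be^2) - (r*al+m*be)^2 - r^2*be^2)
     = m*(n*al - r*be)^2 + (n^2 - m*n - r^2)*(n*al^2 + (n+m)*be^2)) by ring.
  replace (n^2 - m*n - r^2) with 0 in HD by lra.
  assert (Hx : x^2 <= (r*al+m*be)^2) by nra.
  destruct (Req_dec n 0) as [Hn|Hn].
  - assert (r = 0) by lra. assert (m = 0) by lra. subst n r m. nra.
  - assert (0 <= n^2*(al^2+be^2) - (r*al+m*be)^2 - r^2*be^2).
    { assert (0 <= n * (n^2*(al^2+be^2) - (r*al+m*be)^2 - r^2*be^2)).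
      { rewrite HD. assert (0 <= m*(n*al-r*be)^2) by (apply Rmult_le_pos; [lra| apply pow2_ge_0]). lra. }
      assert (0 < n) by lra. nra. }
    nra.
Qed.

Definition OS z w := fun t => exists v : V2, V2norm v <= 1 /\ t = V2norm (M2apply (Xm z w) v).

Lemma Cmod_C0 : Defs.Cmod Defs.C0 = 0.
Proof. unfold Defs.Cmod, Defs.C0; cbn [re im]. replace (0^2+0^2) with 0 by ring. apply sqrt_0. Qed.

Lemma V2norm00 : V2norm (Defs.C0, Defs.C0) = 0.
Proof. unfold V2norm; cbn [fst snd]. rewrite Cmod_C0. replace (0^2+0^2) with 0 by ring. apply sqrt_0. Qed.

Lemma opnorm_lub z w : is_lub (OS z w) (opnorm (Xm z w)).
Proof.
  apply Rsup_lub.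
  - eexists; exists (Defs.C0, Defs.C0); split; [rewrite V2norm00; lra | reflexivity].
  - exists (nrm (Defs.Cmod z) (Defs.Cmod w)). intros x [v [Hv ->]].
    eapply Rle_trans; [apply apply_bound|].
    destruct (nrm_facts (Defs.Cmod z) (Defs.Cmod w)) as (_ & _ & _ & H3); try apply sqrt_pos.
    pose proof (V2norm_nonneg v). nra.
Qed.

Lemma opnorm_le z w : opnorm (Xm z w) <= nrm (Defs.Cmod z) (Defs.Cmod w).
Proof.
  apply (proj2 (opnorm_lub z w)). intros x [v [Hv ->]].
  eapply Rle_trans; [apply apply_bound|].
  destruct (nrm_facts (Defs.Cmod z) (Defs.Cmod w)) as (_ & _ & _ & H3); try apply sqrt_pos.
  pose proof (V2norm_nonneg v). nra.
Qed.

Lemma opnorm_ge z w v : V2norm v <= 1 -> V2norm (M2apply (Xm z w) v) <= opnorm (Xm z w).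
Proof. intros Hv. apply (proj1 (opnorm_lub z w)). exists v; split; auto. Qed.

Lemma opnorm_nonneg z w : 0 <= opnorm (Xm z w).
Proof.
  eapply Rle_trans; [| apply (opnorm_ge z w (Defs.C0, Defs.C0))].
  apply V2norm_nonneg. rewrite V2norm00; lra.
Qed.

Lemma phase (Z W : C) (t : R) : 0 <= t ->
  exists U : C, Cmod U = 1 /\ Cmod (Z*U*RtoC t + W) = Cmod Z * t + Cmod W.
Proof.
  intros Ht.
  destruct (Req_dec (Cmod W) 0) as [HW|HW].
  { apply Cmod_eq_0 in HW. subst W. exists (RtoC 1). split. apply Cmod_1.
    replace (Z * RtoC 1 * RtoC t + 0)%C with (Z * RtoC t)%C by ring.
    rewrite Cmod_mult, Cmod_R, Rabs_pos_eq, Cmod_0 by lra. ring. }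
  destruct (Req_dec (Cmod Z) 0) as [HZ|HZ].
  { apply Cmod_eq_0 in HZ. subst Z. exists (RtoC 1). split. apply Cmod_1.
    replace (0 * RtoC 1 * RtoC t + W)%C with W by ring.
    rewrite Cmod_0. ring. }
  pose proof (Cmod_ge_0 Z); pose proof (Cmod_ge_0 W).
  set (r := Cmod Z) in *. set (m := Cmod W) in *.
  exists (RtoC (/(m*r)) * (W * Cconj Z))%C. split.
  - rewrite !Cmod_mult, Cmod_conj, Cmod_R, Rabs_pos_eq.
    + fold r m. field. lra.
    + apply Rlt_le, Rinv_0_lt_compat. nra.
  - assert (E : (Z * (RtoC (/(m*r)) * (W * Cconj Z)) * RtoC t + W = RtoC (r*t/m + 1) * W)%C).
    { transitivity (RtoC (/(m*r)) * (Z * Cconj Z) * RtoC t * W + W)%C; [ring|].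
      rewrite <- Cmod2_conj. fold r. rewrite <- !RtoC_mult.
      replace (/(m*r) * r^2 * t) with (r*t/m) by (field; lra).
      rewrite RtoC_plus. ring. }
    rewrite E, Cmod_mult, Cmod_R, Rabs_pos_eq.
    + fold m. field. lra.
    + assert (0 <= r*t/m) by (apply Rmult_le_pos; [nra| apply Rlt_le, Rinv_0_lt_compat; lra]). lra.
Qed.

End Aux.

Module Aux2.
Import Coquelicot.Coquelicot.
Import Aux.

Lemma opnorm_lower z w t : 0 <= t ->
  (Defs.Cmod z * t + Defs.Cmod w)^2 + Defs.Cmod z ^2 <= opnorm (Xm z w) ^2 * (1 + t^2).
Proof.
  intros Ht. destruct (phase (toC z) (toC w) t Ht) as [U [HU1 HU2]].
  assert (Hsq : sqrt (1 + t^2) ^2 = 1+t^2) by (apply pow2_sqrt; nra).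
  assert (Hsq0 : 0 < sqrt (1 + t^2)) by (apply sqrt_lt_R0; nra).
  set (sq := sqrt (1 + t^2)) in *. clearbody sq.
  assert (Hk : / sq * sq = 1) by (field; lra).
  assert (Hk0 : 0 < / sq) by (apply Rinv_0_lt_compat; lra).
  set (k := / sq) in *. clearbody k.
  set (v := (ofC (RtoC (t*k) * U), ofC (RtoC k))).
  assert (Hv : V2norm v = 1).
  { unfold V2norm, v; cbn [fst snd]. rewrite !mod_toC, !toC_ofC, Cmod_mult, !Cmod_R, HU1.
    rewrite !Rabs_pos_eq by nra.
    replace ((t*k*1)^2 + k^2) with ((k*sq)^2) by (rewrite Rpow_mult_distr, Hsq; ring).
    rewrite Hk. replace (1^2) with 1 by ring. apply sqrt_1. }
  assert (Hge := opnorm_ge z w v (Req_le _ _ Hv)).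
  assert (HX : V2norm (M2apply (Xm z w) v) =
     k * sqrt ((Cmod (toC z) * t + Cmod (toC w))^2 + Cmod (toC z)^2)).
  { unfold V2norm, M2apply, Xm, v; cbn [fst snd a11 a12 a21 a22].
    rewrite !mod_toC, !toC_add, !toC_mul, !toC_ofC, toC_0.
    replace (toC z * (RtoC (t*k) * U) + toC w * RtoC k)%C
      with (RtoC k * (toC z * U * RtoC t + toC w))%C by (rewrite RtoC_mult; ring).
    replace (RtoC 0 * (RtoC (t*k) * U) + toC z * RtoC k)%C with (RtoC k * toC z)%C by ring.
    rewrite !Cmod_mult, Cmod_R, HU2, Rabs_pos_eq by lra.
    replace ((k * (Cmod (toC z) * t + Cmod (toC w)))^2 + (k * Cmod (toC z))^2)
      with (k^2 * ((Cmod (toC z) * t + Cmod (toC w))^2 + Cmod (toC z)^2)) by ring.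
    rewrite sqrt_mult; [| apply pow2_ge_0 | apply Rplus_le_le_0_compat; apply pow2_ge_0].
    rewrite sqrt_pow2 by lra. reflexivity. }
  rewrite HX in Hge. rewrite !mod_toC.
  set (Y := (Cmod (toC z) * t + Cmod (toC w))^2 + Cmod (toC z)^2) in *.
  assert (HY : 0 <= Y) by (unfold Y; apply Rplus_le_le_0_compat; apply pow2_ge_0).
  assert (HsY : sqrt Y ^2 = Y) by (apply pow2_sqrt; lra).
  pose proof (sqrt_pos Y).
  set (o := opnorm (Xm z w)) in *. clearbody o Y.
  assert (k * sqrt Y * sq <= o * sq) by (apply Rmult_le_compat_r; lra).
  assert (E : k*sqrt Y*sq = sqrt Y) by (replace (k*sqrt Y*sq) with (sqrt Y*(k*sq)) by ring; rewrite Hk; ring).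
  rewrite E in H0.
  rewrite <- Hsq. rewrite <- HsY.
  assert (0 <= sqrt Y) by lra. nra.
Qed.

Definition qC (s p z : Cplx) : Cplx := Cadd (Csub Defs.C1 (Cmul s z)) (Cmul p (Cmul z z)).

Lemma det_form A z w :
  M2det (M2sub M2id (M2mul A (Xm z w))) = Csub (qC (M2tr A) (M2det A) z) (Cmul (a21 A) w).
Proof.
  destruct A as [[a1 a2] [b1 b2] [c1 c2] [d1 d2]]; destruct z as [z1 z2]; destruct w as [w1 w2].
  unfold M2det, M2sub, M2id, M2mul, Xm, qC, M2tr, Csub, Cadd, Cmul, Defs.Copp, Defs.C0, Defs.C1.
  cbn. f_equal; ring.
Qed.

Lemma set_iff A t : muE_set A t <->
  exists z w, qC (M2tr A) (M2det A) z = Cmul (a21 A) w /\ t = opnorm (Xm z w).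
Proof.
  split.
  - intros [X [[z [w ->]] [Hd ->]]]. exists z, w. split; [|reflexivity].
    change (mkM2 z w Defs.C0 z) with (Xm z w) in Hd. rewrite det_form in Hd.
    apply toC_inj. apply (f_equal toC) in Hd. rewrite toC_sub, toC_0 in Hd.
    set (a := toC (qC _ _ _)) in *. set (b := toC (Cmul _ _)) in *.
    replace a with ((a - b) + b)%C by ring. rewrite Hd. ring.
  - intros [z [w [Hq ->]]]. exists (Xm z w). split; [exists z, w; reflexivity|]. split; [|reflexivity].
    rewrite det_form, Hq. apply toC_inj. rewrite toC_sub, toC_0. ring.
Qed.

End Aux2.

Module Aux3.
Import Coquelicot.Coquelicot.
Import Aux Aux2.

Lemma Cmod_nonneg a : 0 <= Defs.Cmod a.
Proof. apply sqrt_pos. Qed.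

Lemma inf_props (S : R -> Prop) c0 : (exists t, S t) -> (forall t, S t -> c0 <= t) ->
  (forall t, S t -> Rinf S <= t) /\ (forall c, (forall t, S t -> c <= t) -> c <= Rinf S).
Proof.
  intros [t0 Ht0] Hb. unfold Rinf.
  assert (H : is_lub (fun u => S (-u)) (Rsup (fun u => S (-u)))).
  { apply Rsup_lub. exists (-t0). rewrite Ropp_involutive; auto.
    exists (-c0). intros u Hu. specialize (Hb _ Hu). lra. }
  destruct H as [H1 H2]. unfold is_upper_bound in *. split.
  - intros t Ht. assert (S (- - t)) by (rewrite Ropp_involutive; auto). specialize (H1 _ H). lra.
  - intros c Hc. assert (Rsup (fun u => S (-u)) <= -c).
    { apply H2. intros u Hu. specialize (Hc _ Hu). lra. } lra.
Qed.

Lemma toC_q s p z : toC (qC s p z) = (RtoC 1 - toC s * toC z + toC p * (toC z * toC z))%C.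
Proof. reflexivity. Qed.

Lemma tri3 (a b c : C) : Cmod (a + b - c)%C <= Cmod a + Cmod b + Cmod c.
Proof.
  eapply Rle_trans. apply Cmod_triangle. rewrite Cmod_opp.
  pose proof (Cmod_triangle a b). lra.
Qed.

Lemma elem_lower z w :
  0 <= opnorm (Xm z w) /\ Defs.Cmod z <= opnorm (Xm z w) /\ Defs.Cmod w <= opnorm (Xm z w) /\
  (Defs.Cmod z * Defs.Cmod z + Defs.Cmod w)^2 + Defs.Cmod z ^2 <= opnorm (Xm z w)^2 * (1 + Defs.Cmod z ^2) /\
  Defs.Cmod w ^2 + Defs.Cmod z ^2 <= opnorm (Xm z w)^2.
Proof.
  pose proof (opnorm_nonneg z w). pose proof (opnorm_lower z w 0 (Rle_refl 0)).
  pose proof (opnorm_lower z w (Defs.Cmod z) (Cmod_nonneg z)).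
  pose proof (Cmod_nonneg z). pose proof (Cmod_nonneg w).
  set (T := opnorm (Xm z w)) in *. set (r := Defs.Cmod z) in *. set (m := Defs.Cmod w) in *.
  clearbody T r m. repeat split; try nra.
Qed.

Lemma elem_upper z w c : 0 < c -> c <= opnorm (Xm z w) ->
  c^2 - Defs.Cmod z ^2 <= Defs.Cmod w * c.
Proof.
  intros Hc H. apply nrm_ge; try apply Cmod_nonneg; auto.
  eapply Rle_trans; [exact H| apply opnorm_le].
Qed.

Lemma modq q a w : q = Cmul a w -> Defs.Cmod q = Defs.Cmod a * Defs.Cmod w.
Proof. intros ->. rewrite !mod_toC, toC_mul. apply Cmod_mult. Qed.

Lemma solve_w q a : Defs.Cmod a <> 0 -> exists w, q = Cmul a w.
Proof.
  intros Ha. exists (ofC (toC q / toC a)%C). apply toC_inj. rewrite toC_mul, toC_ofC.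
  field. intros E. apply Ha. rewrite mod_toC, E. apply Cmod_0.
Qed.

Lemma q_fac s p z l1 l2 : s = Cadd l1 l2 -> p = Cmul l1 l2 ->
  toC (qC s p z) = ((RtoC 1 - toC l1 * toC z) * (RtoC 1 - toC l2 * toC z))%C.
Proof. intros -> ->. rewrite toC_q, toC_add, toC_mul. ring. Qed.

Lemma one_minus (L Z : C) : 1 - Cmod L * Cmod Z <= Cmod (RtoC 1 - L*Z)%C.
Proof.
  pose proof (Cmod_triangle (RtoC 1 - L*Z)%C (L*Z)%C).
  replace (RtoC 1 - L*Z + L*Z)%C with (RtoC 1) in H by ring.
  rewrite Cmod_1, Cmod_mult in H. lra.
Qed.

Lemma qlow s p z l1 l2 rho : s = Cadd l1 l2 -> p = Cmul l1 l2 ->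
  Defs.Cmod l1 <= rho -> Defs.Cmod l2 <= rho -> rho * Defs.Cmod z <= 1 ->
  (1 - rho * Defs.Cmod z)^2 <= Defs.Cmod (qC s p z).
Proof.
  intros Hs Hp H1 H2 H3. rewrite (mod_toC (qC s p z)), (q_fac s p z l1 l2 Hs Hp), Cmod_mult.
  pose proof (one_minus (toC l1) (toC z)). pose proof (one_minus (toC l2) (toC z)).
  rewrite !mod_toC in *. pose proof (Cmod_ge_0 (toC z)).
  set (r := Cmod (toC z)) in *. clearbody r.
  assert (0 <= 1 - rho * r) by lra.
  assert (1 - rho * r <= Cmod (RtoC 1 - toC l1 * toC z)) by nra.
  assert (1 - rho * r <= Cmod (RtoC 1 - toC l2 * toC z)) by nra.
  replace ((1 - rho*r)^2) with ((1-rho*r)*(1-rho*r)) by ring.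
  apply Rmult_le_compat; lra.
Qed.

Lemma root_elem s p l1 l2 (l : C) a : toC s = (l1 + l2)%C -> toC p = (l1 * l2)%C ->
  (l = l1 \/ l = l2) -> l <> RtoC 0 -> qC s p (ofC (/ l)%C) = Cmul a Defs.C0.
Proof.
  intros Hs Hp Hl Hl0. apply toC_inj. rewrite toC_q, toC_mul, toC_0, Hs, Hp, toC_ofC.
  replace (RtoC 1 - (l1 + l2) * / l + l1 * l2 * (/ l * / l))%C
    with ((RtoC 1 - l1 * / l) * (RtoC 1 - l2 * / l))%C by ring.
  destruct Hl as [-> | ->]; rewrite Cinv_r by auto; ring.
Qed.

Lemma csqrt (c : C) : exists d : C, (d * d = c)%C.
Proof.
  destruct c as [x y].
  assert (HM : sqrt (x^2 + y^2) ^2 = x^2+y^2) by (apply pow2_sqrt; nra).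
  assert (HM0 : 0 <= sqrt (x^2 + y^2)) by apply sqrt_pos.
  set (M := sqrt (x^2 + y^2)) in *. clearbody M.
  assert (Hx1 : 0 <= (M+x)/2) by nra.
  assert (Hx2 : 0 <= (M-x)/2) by nra.
  assert (Ha : sqrt ((M+x)/2) ^2 = (M+x)/2) by (apply pow2_sqrt; lra).
  assert (Hb : sqrt ((M-x)/2) ^2 = (M-x)/2) by (apply pow2_sqrt; lra).
  assert (Hab : sqrt ((M+x)/2) * sqrt ((M-x)/2) = Rabs y / 2).
  { rewrite <- sqrt_mult by lra.
    replace ((M+x)/2 * ((M-x)/2)) with ((Rabs y/2)^2).
    - apply sqrt_pow2. pose proof (Rabs_pos y). lra.
    - replace ((Rabs y/2)^2) with (Rabs y ^2/4) by field. rewrite pow2_abs. nra. }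
  set (a := sqrt ((M+x)/2)) in *. set (b := sqrt ((M-x)/2)) in *. clearbody a b.
  destruct (Rle_dec 0 y) as [Hy|Hy].
  - exists (a, b). unfold Cmult; cbn [fst snd]. rewrite Rabs_pos_eq in Hab by lra. f_equal; nra.
  - exists (a, -b). unfold Cmult; cbn [fst snd]. rewrite Rabs_left in Hab by lra. f_equal; nra.
Qed.

Lemma roots (s p : C) : exists l1 l2 : C, s = (l1 + l2)%C /\ p = (l1 * l2)%C.
Proof.
  destruct (csqrt (s*s - (p+p+p+p))%C) as [d Hd].
  set (h := RtoC (/2)).
  assert (Hh : (h + h = RtoC 1)%C) by (unfold h; rewrite <- RtoC_plus; f_equal; field).
  exists (h*(s+d))%C, (h*(s-d))%C. split.
  - transitivity ((h+h)*s)%C. rewrite Hh; ring. ring.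
  - transitivity (h*h*(s*s - d*d))%C.
    2: ring.
    rewrite Hd. transitivity ((h+h)*(h+h)*p)%C. rewrite Hh; ring. ring.
Qed.

End Aux3.

Module Aux4.
Import Coquelicot.Coquelicot.
Import Aux Aux2 Aux3.

Lemma S_pos A : exists c0, 0 < c0 /\ forall t, muE_set A t -> c0 <= t.
Proof.
  pose proof (Cmod_nonneg (a21 A)); pose proof (Cmod_nonneg (M2tr A)); pose proof (Cmod_nonneg (M2det A)).
  set (K := Defs.Cmod (a21 A) + Defs.Cmod (M2tr A) + Defs.Cmod (M2det A)).
  assert (HK : 0 <= K) by (unfold K; lra).
  exists (/(1+K)). split. apply Rinv_0_lt_compat; lra.
  intros t Ht. apply set_iff in Ht. destruct Ht as [z [w [Hq ->]]].
  destruct (elem_lower z w) as (HT0 & HTr & HTm & _).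
  set (T := opnorm (Xm z w)) in *. clearbody T.
  assert (HKT : 1 <= (1+K) * T).
  { destruct (Rle_dec 1 T) as [HT|HT]; [nra|].
    apply (f_equal toC) in Hq. rewrite toC_q, toC_mul in Hq.
    assert (E : RtoC 1 = (toC (a21 A) * toC w + toC (M2tr A) * toC z - toC (M2det A) * (toC z * toC z))%C).
    { rewrite <- Hq. ring. }
    pose proof (tri3 (toC (a21 A) * toC w) (toC (M2tr A) * toC z) (toC (M2det A) * (toC z * toC z))) as Ht.
    rewrite <- E, Cmod_1, !Cmod_mult in Ht. rewrite !mod_toC in *.
    unfold K in *. pose proof (Cmod_ge_0 (toC z)). pose proof (Cmod_ge_0 (toC w)).
    assert (Hzz : Cmod (toC z) * Cmod (toC z) <= T) by nra.
    pose proof (Cmod_ge_0 (toC (a21 A))). pose proof (Cmod_ge_0 (toC (M2tr A))). pose proof (Cmod_ge_0 (toC (M2det A))).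
    assert (Cmod (toC (a21 A)) * Cmod (toC w) <= Cmod (toC (a21 A)) * T) by (apply Rmult_le_compat_l; lra).
    assert (Cmod (toC (M2tr A)) * Cmod (toC z) <= Cmod (toC (M2tr A)) * T) by (apply Rmult_le_compat_l; lra).
    assert (Cmod (toC (M2det A)) * (Cmod (toC z) * Cmod (toC z)) <= Cmod (toC (M2det A)) * T) by (apply Rmult_le_compat_l; lra).
    rewrite !mod_toC. nra. }
  apply (Rmult_le_reg_l (1+K)); [lra|]. rewrite Rinv_r by lra. exact HKT.
Qed.

Lemma mu_lt1 A : muE A < 1 <-> exists c, 1 < c /\ forall t, muE_set A t -> c <= t.
Proof.
  unfold muE. destruct (excluded_middle_informative _) as [He|Hne].
  - destruct (S_pos A) as [c0 [Hc0 Hb]].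
    destruct (inf_props _ _ He Hb) as [I1 I2].
    assert (HI : c0 <= Rinf (muE_set A)) by (apply I2; auto).
    set (I := Rinf (muE_set A)) in *. clearbody I.
    assert (Hi : I * / I = 1) by (field; lra).
    assert (Hi0 : 0 < / I) by (apply Rinv_0_lt_compat; lra).
    split.
    + intros H. exists I. split; [nra | auto].
    + intros [c [Hc1 Hc]]. assert (c <= I) by (apply I2; auto). nra.
  - split; intros _; [|lra]. exists 2. split; [lra|]. intros t Ht. exfalso; apply Hne; eauto.
Qed.

Lemma mu_le1 A : muE A <= 1 <-> forall t, muE_set A t -> 1 <= t.
Proof.
  unfold muE. destruct (excluded_middle_informative _) as [He|Hne].
  - destruct (S_pos A) as [c0 [Hc0 Hb]].
    destruct (inf_props _ _ He Hb) as [I1 I2].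
    assert (HI : c0 <= Rinf (muE_set A)) by (apply I2; auto).
    set (I := Rinf (muE_set A)) in *. clearbody I.
    assert (Hi : I * / I = 1) by (field; lra).
    assert (Hi0 : 0 < / I) by (apply Rinv_0_lt_compat; lra).
    split.
    + intros H t Ht. specialize (I1 _ Ht). nra.
    + intros Hc. assert (1 <= I) by (apply I2; auto). nra.
  - split; intros _; [|lra]. intros t Ht. exfalso; apply Hne; eauto.
Qed.

End Aux4.

Module Aux5.
Import Coquelicot.Coquelicot.
Import Aux Aux2 Aux3 Aux4.

Definition RS s p := fun t => exists z : Cplx, Defs.Cmod z < 1 /\ t = ratio s p z.

Lemma ratio_eq s p z : ratio s p z = (1 - Defs.Cmod z ^2) / Defs.Cmod (qC s p z).
Proof. reflexivity. Qed.

Lemma ratio_lub s p B : (forall z, Defs.Cmod z < 1 -> ratio s p z <= B) -> is_lub (RS s p) (Rsup (RS s p)).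
Proof.
  intros Hb. apply Rsup_lub.
  - exists (ratio s p Defs.C0). exists Defs.C0. split; auto. rewrite Cmod_C0; lra.
  - exists B. intros x [z [Hz ->]]. auto.
Qed.

Lemma roots_cplx A : exists l1 l2 : Cplx, M2tr A = Cadd l1 l2 /\ M2det A = Cmul l1 l2.
Proof.
  destruct (roots (toC (M2tr A)) (toC (M2det A))) as [L1 [L2 [Hs Hp]]].
  exists (ofC L1), (ofC L2). split; apply toC_inj.
  - rewrite toC_add, !toC_ofC. exact Hs.
  - rewrite toC_mul, !toC_ofC. exact Hp.
Qed.

Lemma root_X A l1 l2 l : M2tr A = Cadd l1 l2 -> M2det A = Cmul l1 l2 -> (l = l1 \/ l = l2) ->
  Defs.Cmod l <> 0 -> exists t, muE_set A t /\ t <= / Defs.Cmod l.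
Proof.
  intros Hs Hp Hl Hl0.
  assert (HL : toC l <> RtoC 0) by (intros E; apply Hl0; rewrite mod_toC, E; apply Cmod_0).
  assert (Hq : qC (M2tr A) (M2det A) (ofC (/ toC l)%C) = Cmul (a21 A) Defs.C0).
  { apply (root_elem _ _ (toC l1) (toC l2)).
    - rewrite Hs, toC_add; reflexivity.
    - rewrite Hp, toC_mul; reflexivity.
    - destruct Hl as [-> | ->]; auto.
    - exact HL. }
  exists (opnorm (Xm (ofC (/ toC l)%C) Defs.C0)). split.
  - apply set_iff. eexists; eexists; split; [exact Hq | reflexivity].
  - eapply Rle_trans; [apply opnorm_le|]. rewrite Cmod_C0, nrm_r0 by apply Cmod_nonneg.
    rewrite !mod_toC, toC_ofC, Cmod_inv by exact HL. lra.
Qed.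

Lemma dir1 A : muE A < 1 -> inG (M2tr A) (M2det A) /\
  Defs.Cmod (a21 A) * Rsup (RS (M2tr A) (M2det A)) < 1.
Proof.
  intros Hmu. apply mu_lt1 in Hmu. destruct Hmu as [c [Hc1 Hc]].
  assert (Hel : forall z w, qC (M2tr A) (M2det A) z = Cmul (a21 A) w -> c <= opnorm (Xm z w)).
  { intros z w Hq. apply Hc, set_iff. exists z, w; auto. }
  split.
  - destruct (roots_cplx A) as [l1 [l2 [Hs Hp]]]. exists l1, l2.
    assert (Hr : forall l, l = l1 \/ l = l2 -> Defs.Cmod l < 1).
    { intros l Hl. apply Rnot_le_lt. intros Hge.
      destruct (root_X A l1 l2 l Hs Hp Hl) as [t [Ht Htle]]; [lra|].
      specialize (Hc _ Ht).
      assert (/ Defs.Cmod l <= 1) by (rewrite <- Rinv_1; apply Rinv_le_contravar; lra). lra. }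
    repeat split; auto.
  - destruct (Req_dec (Defs.Cmod (a21 A)) 0) as [Ha|Ha]. { rewrite Ha. lra. }
    pose proof (Cmod_nonneg (a21 A)) as Ha0.
    assert (Hb : forall z, Defs.Cmod z < 1 -> ratio (M2tr A) (M2det A) z <= / c / Defs.Cmod (a21 A)).
    { intros z Hz. destruct (solve_w (qC (M2tr A) (M2det A) z) (a21 A) Ha) as [w Hq].
      pose proof (Hel _ _ Hq) as Ht. apply elem_upper in Ht; [|lra].
      pose proof (modq _ _ _ Hq) as Hm.
      rewrite ratio_eq, Hm.
      pose proof (Cmod_nonneg z); pose proof (Cmod_nonneg w).
      set (a := Defs.Cmod (a21 A)) in *. set (r := Defs.Cmod z) in *. set (m := Defs.Cmod w) in *.
      clearbody a r m.
      assert (0 < c^2 - r^2) by nra.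
      assert (0 < m) by (apply (Rmult_lt_reg_r c); lra).
      assert (r^2*(c^2-1) >= 0) by (apply Rle_ge, Rmult_le_pos; nra).
      assert (c * (m - c*(1-r^2)) >= 0) by nra.
      assert (c * (1 - r^2) <= m) by nra.
      replace ((1 - r^2)/(a*m)) with ((1-r^2)/m / a) by (field; lra).
      unfold Rdiv at 1 3. apply Rmult_le_compat_r. left; apply Rinv_0_lt_compat; lra.
      apply (Rmult_le_reg_l (c*m)); [nra|].
      replace (c*m*((1-r^2)/m)) with (c*(1-r^2)) by (field; lra).
      replace (c*m*/c) with m by (field; lra). lra. }
    assert (Hl := ratio_lub (M2tr A) (M2det A) _ Hb).
    assert (Rsup (RS (M2tr A) (M2det A)) <= / c / Defs.Cmod (a21 A)).
    { apply Hl. intros x [z [Hz ->]]. auto. }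
    assert (Defs.Cmod (a21 A) * Rsup (RS (M2tr A) (M2det A)) <= / c).
    { replace (/ c) with (Defs.Cmod (a21 A) * (/ c / Defs.Cmod (a21 A))) by (field; lra).
      apply Rmult_le_compat_l; lra. }
    assert (/ c < 1) by (rewrite <- Rinv_1; apply Rinv_lt_contravar; lra). lra.
Qed.

End Aux5.

Module Aux6.
Import Coquelicot.Coquelicot.
Import Aux Aux2 Aux3 Aux4 Aux5.

Lemma dir3 A : muE A <= 1 -> inGamma (M2tr A) (M2det A) /\
  forall z, Defs.Cmod z < 1 -> Defs.Cmod (a21 A) * ratio (M2tr A) (M2det A) z <= 1.
Proof.
  intros Hmu. pose proof (proj1 (mu_le1 A) Hmu) as Hmu1. clear Hmu. rename Hmu1 into Hmu.
  split.
  - destruct (roots_cplx A) as [l1 [l2 [Hs Hp]]]. exists l1, l2.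
    assert (Hr : forall l, l = l1 \/ l = l2 -> Defs.Cmod l <= 1).
    { intros l Hl. apply Rnot_lt_le. intros Hge.
      destruct (root_X A l1 l2 l Hs Hp Hl) as [t [Ht Htle]]; [lra|].
      specialize (Hmu _ Ht).
      assert (/ Defs.Cmod l < 1) by (rewrite <- Rinv_1; apply Rinv_lt_contravar; lra). lra. }
    repeat split; auto.
  - intros z Hz.
    destruct (Req_dec (Defs.Cmod (a21 A)) 0) as [Ha|Ha]. { rewrite Ha. lra. }
    pose proof (Cmod_nonneg (a21 A)) as Ha0.
    destruct (solve_w (qC (M2tr A) (M2det A) z) (a21 A) Ha) as [w Hq].
    assert (Ht : 1 <= opnorm (Xm z w)) by (apply Hmu, set_iff; exists z, w; auto).
    apply elem_upper in Ht; [|lra].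
    pose proof (modq _ _ _ Hq) as Hm.
    rewrite ratio_eq, Hm.
    pose proof (Cmod_nonneg z); pose proof (Cmod_nonneg w).
    set (a := Defs.Cmod (a21 A)) in *. set (r := Defs.Cmod z) in *. set (m := Defs.Cmod w) in *.
    clearbody a r m.
    assert (0 < m) by nra.
    replace (a * ((1 - r^2)/(a*m))) with ((1-r^2) * / m) by (field; lra).
    assert (m * / m = 1) by (field; lra).
    assert (0 < / m) by (apply Rinv_0_lt_compat; lra).
    nra.
Qed.

Lemma dir4 A : inGamma (M2tr A) (M2det A) ->
  (forall z, Defs.Cmod z < 1 -> Defs.Cmod (a21 A) * ratio (M2tr A) (M2det A) z <= 1) ->
  muE A <= 1.
Proof.
  intros [l1 [l2 [H1 [H2 [Hs Hp]]]]] Hr. apply (proj2 (mu_le1 A)). intros t Ht.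
  apply set_iff in Ht. destruct Ht as [z [w [Hq ->]]].
  destruct (elem_lower z w) as (HT0 & HTr & HTm & Hlow & Hlow0).
  pose proof (modq _ _ _ Hq) as Hm.
  pose proof (Cmod_nonneg z); pose proof (Cmod_nonneg w); pose proof (Cmod_nonneg (a21 A)).
  destruct (Rle_dec 1 (Defs.Cmod z)) as [Hz|Hz]; [lra|].
  assert (Hql := qlow _ _ z l1 l2 1 Hs Hp H1 H2 ltac:(lra)).
  specialize (Hr z ltac:(lra)). rewrite ratio_eq, Hm in Hr. rewrite Hm in Hql.
  set (a := Defs.Cmod (a21 A)) in *. set (r := Defs.Cmod z) in *. set (m := Defs.Cmod w) in *.
  set (T := opnorm (Xm z w)) in *.
  clearbody a r m T.
  assert (0 < a * m) by nra.
  assert (0 < a) by nra. assert (0 < m) by nra.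
  replace (a * ((1 - r^2)/(a*m))) with ((1-r^2) * / m) in Hr by (field; lra).
  assert (m * / m = 1) by (field; lra).
  assert (0 < / m) by (apply Rinv_0_lt_compat; lra).
  assert (1 - r^2 <= m) by nra.
  assert (1 + r^2 <= T^2 * (1 + r^2)) by nra.
  assert (1 <= T^2) by nra.
  nra.
Qed.

End Aux6.

Module Aux7.
Import Coquelicot.Coquelicot.
Import Aux Aux2 Aux3 Aux4 Aux5.

Lemma dir2 A : inG (M2tr A) (M2det A) ->
  Defs.Cmod (a21 A) * Rsup (RS (M2tr A) (M2det A)) < 1 -> muE A < 1.
Proof.
  intros [l1 [l2 [H1 [H2 [Hs Hp]]]]] Hsup. apply mu_lt1.
  pose proof (Cmod_nonneg l1); pose proof (Cmod_nonneg l2).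
  assert (Hr1 : Defs.Cmod l1 <= Rmax (Defs.Cmod l1) (Defs.Cmod l2)) by apply Rmax_l.
  assert (Hr2 : Defs.Cmod l2 <= Rmax (Defs.Cmod l1) (Defs.Cmod l2)) by apply Rmax_r.
  assert (Hrho : Rmax (Defs.Cmod l1) (Defs.Cmod l2) < 1) by (apply Rmax_lub_lt; auto).
  set (rho := Rmax (Defs.Cmod l1) (Defs.Cmod l2)) in *. clearbody rho.
  assert (Hrho0 : 0 <= rho) by lra.
  assert (Hb : forall z, Defs.Cmod z < 1 -> ratio (M2tr A) (M2det A) z <= / (1-rho)^2).
  { intros z Hz. rewrite ratio_eq. pose proof (Cmod_nonneg z).
    assert (Hrz : rho * Defs.Cmod z <= 1).
    { assert (rho * Defs.Cmod z <= rho * 1) by (apply Rmult_le_compat_l; lra). lra. }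
    assert (Hq := qlow _ _ z l1 l2 rho Hs Hp Hr1 Hr2 Hrz).
    assert ((1-rho)^2 <= (1 - rho*Defs.Cmod z)^2).
    { apply pow_incr. assert (rho * Defs.Cmod z <= rho * 1) by (apply Rmult_le_compat_l; lra). lra. }
    assert (0 < (1-rho)^2) by nra.
    set (q := Defs.Cmod (qC (M2tr A) (M2det A) z)) in *. clearbody q.
    assert (0 < / q) by (apply Rinv_0_lt_compat; lra).
    unfold Rdiv. apply Rle_trans with (1 * / q).
    - apply Rmult_le_compat_r; nra.
    - rewrite Rmult_1_l. apply Rinv_le_contravar; lra. }
  assert (Hl := ratio_lub (M2tr A) (M2det A) _ Hb).
  assert (Hin : forall z, Defs.Cmod z < 1 -> ratio (M2tr A) (M2det A) z <= Rsup (RS (M2tr A) (M2det A))).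
  { intros z Hz. apply Hl. exists z; auto. }
  pose proof (Cmod_nonneg (a21 A)) as Ha0.
  destruct (Req_dec (Defs.Cmod (a21 A)) 0) as [Ha|Ha].
  - assert (E : 2/(1+rho) = 1 + (1-rho)/(1+rho)) by (field; lra).
    exists (2/(1+rho)). split.
    { rewrite E. assert (0 < (1-rho)/(1+rho)) by (apply Rdiv_lt_0_compat; lra). lra. }
    intros t Ht. apply set_iff in Ht. destruct Ht as [z [w [Hq ->]]].
    pose proof (modq _ _ _ Hq) as Hm. rewrite Ha, Rmult_0_l in Hm.
    destruct (elem_lower z w) as (HT0 & HTr & HTm & _).
    pose proof (Cmod_nonneg z).
    assert (1 <= rho * Defs.Cmod z).
    { apply Rnot_lt_le. intros Hlt.
      pose proof (qlow _ _ z l1 l2 rho Hs Hp Hr1 Hr2 (Rlt_le _ _ Hlt)) as Hq0. rewrite Hm in Hq0.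
      assert (0 < 1 - rho * Defs.Cmod z) by lra. nra. }
    apply Rle_trans with (Defs.Cmod z); [|auto].
    apply (Rmult_le_reg_r (1+rho)); [lra|].
    replace (2/(1+rho)*(1+rho)) with 2 by (field; lra).
    assert (rho * Defs.Cmod z <= 1 * Defs.Cmod z) by (apply Rmult_le_compat_r; lra). lra.
  - assert (Ha1 : 0 < Defs.Cmod (a21 A)) by lra.
    set (a := Defs.Cmod (a21 A)) in *.
    set (M := a * Rsup (RS (M2tr A) (M2det A))) in *.
    set (d0 := ((1-rho)/2)^2).
    assert (Hd0 : 0 < d0 <= 1/4).
    { unfold d0. assert (0 < (1-rho)/2 <= 1/2) by lra. split; [apply pow_lt; lra|].
      replace (1/4) with ((1/2)^2) by field. apply pow_incr; lra. }
    set (de := d0/(1+a)).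
    assert (Hde : 0 < de <= d0).
    { unfold de. split. apply Rdiv_lt_0_compat; lra.
      apply (Rmult_le_reg_r (1+a)); [lra|]. replace (d0/(1+a)*(1+a)) with d0 by (field; lra).
      assert (d0 * 1 <= d0 * (1+a)) by (apply Rmult_le_compat_l; lra). lra. }
    set (ep := de*(1-M)).
    assert (Hep : 0 < ep) by (unfold ep; apply Rmult_lt_0_compat; lra).
    set (e := Rmin (de^2) ep).
    assert (He1 : e <= de^2) by apply Rmin_l.
    assert (He2 : e <= ep) by apply Rmin_r.
    assert (He0 : 0 < e) by (apply Rmin_glb_lt; nra).
    assert (He3 : e <= 1).
    { assert (de^2 <= 1) by (replace 1 with (1^2) by ring; apply pow_incr; lra). lra. }
    exists (Rmin ((3-rho)/2) (1+e/3)). split.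
    { apply Rmin_glb_lt; lra. }
    intros t Ht. apply set_iff in Ht. destruct Ht as [z [w [Hq ->]]].
    pose proof (modq _ _ _ Hq) as Hm. fold a in Hm.
    destruct (elem_lower z w) as (HT0 & HTr & HTm & Hlow & Hlow0).
    pose proof (Cmod_nonneg z); pose proof (Cmod_nonneg w).
    destruct (Rle_dec ((3-rho)/2) (Defs.Cmod z)) as [Hz|Hz].
    { pose proof (Rmin_l ((3-rho)/2) (1+e/3)). lra. }
    assert (Hrz : rho * Defs.Cmod z <= (1+rho)/2).
    { assert (rho * Defs.Cmod z <= rho * ((3-rho)/2)) by (apply Rmult_le_compat_l; lra).
      pose proof (pow2_ge_0 (1-rho)). lra. }
    assert (Hql := qlow _ _ z l1 l2 rho Hs Hp Hr1 Hr2 ltac:(lra)).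
    assert (Hqd : d0 <= a * Defs.Cmod w).
    { rewrite <- Hm. eapply Rle_trans; [|exact Hql]. unfold d0.
      assert (0 <= (1-rho)/2 <= 1 - rho * Defs.Cmod z) by lra. apply pow_incr; lra. }
    assert (Hmde : de <= Defs.Cmod w).
    { unfold de. apply (Rmult_le_reg_r (1+a)); [lra|].
      replace (d0/(1+a)*(1+a)) with d0 by (field; lra). lra. }
    assert (HT : 1 + e <= opnorm (Xm z w)^2).
    { destruct (Rle_dec 1 (Defs.Cmod z)) as [Hz1|Hz1].
      - assert (de^2 <= Defs.Cmod w ^2) by (apply pow_incr; lra).
        assert (1^2 <= Defs.Cmod z ^2) by (apply pow_incr; lra). lra.
      - specialize (Hin z ltac:(lra)). rewrite ratio_eq, Hm in Hin.
        assert (Hra : a * ((1 - Defs.Cmod z ^2) / (a * Defs.Cmod w)) <= M).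
        { unfold M. apply Rmult_le_compat_l; lra. }
        set (r := Defs.Cmod z) in *. set (m := Defs.Cmod w) in *. set (T := opnorm (Xm z w)) in *.
        clearbody r m T.
        assert (0 < m) by lra.
        replace (a * ((1 - r^2)/(a*m))) with ((1-r^2) * / m) in Hra by (field; lra).
        assert (m * / m = 1) by (field; lra).
        assert (0 < / m) by (apply Rinv_0_lt_compat; lra).
        assert (Hmm : 1 - r^2 <= M * m).
        { assert (Hx : (1-r^2) * /m * m <= M * m) by (apply Rmult_le_compat_r; lra).
          replace ((1-r^2) * /m * m) with (1-r^2) in Hx by (field; lra). lra. }
        assert (Hu : ep <= r*r + m - 1).
        { unfold ep. assert (de*(1-M) <= m*(1-M)) by (apply Rmult_le_compat_r; lra). lra. }
        assert (Hp1 : (1+ep)^2 <= (r*r+m)^2) by (apply pow_incr; lra).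
        pose proof (pow2_ge_0 ep).
        assert (Hs1 : 1 + r^2 + 2*ep <= T^2 * (1+r^2)) by lra.
        assert (Hrr2 : r^2 <= 1) by (replace 1 with (1^2) by ring; apply pow_incr; lra).
        assert (ep * r^2 <= ep * 1) by (apply Rmult_le_compat_l; lra).
        assert (Hs2 : 0 * (1 + r^2) <= (T^2 - 1 - ep) * (1 + r^2)) by lra.
        apply Rmult_le_reg_r in Hs2; [lra|]. pose proof (pow2_ge_0 r). lra. }
    pose proof (Rmin_r ((3-rho)/2) (1+e/3)).
    set (T := opnorm (Xm z w)) in *. clearbody T.
    assert (1 + e/3 <= T).
    { destruct (Rle_dec (1+e/3) T) as [Hok|Hno]; auto. exfalso.
      assert (T*T < (1+e/3)*(1+e/3)) by (apply Rmult_le_0_lt_compat; lra).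
      assert (e*e <= e*1) by (apply Rmult_le_compat_l; lra). lra. }
    lra.
Qed.

End Aux7.

Theorem proposition3p1 (A : M2) :
  let s := M2tr A in
  let p := M2det A in
  (muE A < 1 <->
     inG s p /\
     Cmod (a21 A) * Rsup (fun t => exists z : Cplx, Cmod z < 1 /\ t = ratio s p z) < 1)
  /\
  (muE A <= 1 <->
     inGamma s p /\
     (forall z : Cplx, Cmod z < 1 -> Cmod (a21 A) * ratio s p z <= 1)).
Proof.
  intros s p. split; split.
  - intros H. exact (Aux5.dir1 A H).
  - intros [H1 H2]. exact (Aux7.dir2 A H1 H2).
  - intros H. exact (Aux6.dir3 A H).
  - intros [H1 H2]. exact (Aux6.dir4 A H1 H2).
Qed.
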